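(* Let $\{(a_i,b_i,m_i,n_i):i\in\mathbb{Z}\}$ be a positive ABMN solution and $\phi_i=\frac{n_{i-1}-n_i}{m_i-m_{i-1}}$. Then for every $i\in\mathbb{Z}$: $\frac{m_i-m_{i-1}}{m_{i+1}-m_{i-1}}=\frac{1}{c(\phi_i)}$, $\quad\frac{n_{i-1}-n_i}{n_{i-1}-n_{i+1}}=\frac{1}{d(\phi_i)}$, $\quad s(\phi_i)=\phi_{i+1}$.
   Context: ABMN system on $\mathbb{Z}$: real variables $a_i,b_i\ge0$, $m_i,n_i$ with, for all $i$, $(a_i+b_i)(m_i+a_i)=a_im_{i+1}+b_im_{i-1}$, $(a_i+b_i)(n_i+b_i)=a_in_{i+1}+b_in_{i-1}$, $(a_i+b_i)^2=b_i(m_{i+1}-m_{i-1})$, $(a_i+b_i)^2=a_i(n_{i-1}-n_{i+1})$; positive if all $a_i,b_i>0$ (then $m$ is strictly increasing and $n$ strictly decreasing). For $x>0$ let $\omega=\sqrt{8x+1}$, $c(x)=\frac{(\omega+3)^2}{16}$, $d(x)=\frac{(\omega+3)^2}{8(\omega+1)}$, $s(x)=\frac{(\omega-1)^2}{4(\omega+7)}$. *)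

(* Defs.v *)
From Stdlib Require Import Reals ZArith.
Open Scope R_scope.

Definition ABMN (a b m n : Z -> R) : Prop :=
  forall i : Z,
    0 <= a i /\ 0 <= b i /\
    (a i + b i) * (m i + a i) = a i * m (i + 1)%Z + b i * m (i - 1)%Z /\
    (a i + b i) * (n i + b i) = a i * n (i + 1)%Z + b i * n (i - 1)%Z /\
    (a i + b i) ^ 2 = b i * (m (i + 1)%Z - m (i - 1)%Z) /\
    (a i + b i) ^ 2 = a i * (n (i - 1)%Z - n (i + 1)%Z).

Definition positive_ABMN (a b m n : Z -> R) : Prop :=
  ABMN a b m n /\ forall i : Z, 0 < a i /\ 0 < b i.

Definition omega (x : R) : R := sqrt (8 * x + 1).
Definition cfun (x : R) : R := (omega x + 3) ^ 2 / 16.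
Definition dfun (x : R) : R := (omega x + 3) ^ 2 / (8 * (omega x + 1)).
Definition sfun (x : R) : R := (omega x - 1) ^ 2 / (4 * (omega x + 7)).

Definition phi (m n : Z -> R) (i : Z) : R :=
  (n (i - 1)%Z - n i) / (m i - m (i - 1)%Z).

(* Main.v *)
Require Import Defs.
From Stdlib Require Import Reals ZArith Lra Psatz.
Open Scope R_scope.

Theorem mainTheorem11 (a b m n : Z -> R) :
  positive_ABMN a b m n ->
  forall i : Z,
    (m i - m (i - 1)%Z) / (m (i + 1)%Z - m (i - 1)%Z) = 1 / cfun (phi m n i) /\
    (n (i - 1)%Z - n i) / (n (i - 1)%Z - n (i + 1)%Z) = 1 / dfun (phi m n i) /\
    sfun (phi m n i) = phi m n (i + 1)%Z.
Proof.
  intros [HA HP] i.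
  destruct (HA i) as [_ [_ [H1 [H2 [H3 H4]]]]].
  destruct (HP i) as [Ha Hb].
  unfold phi, cfun, dfun, sfun, omega.
  replace (i + 1 - 1)%Z with i by lia.
  set (A := a i) in *. set (B := b i) in *.
  set (M0 := m (i-1)%Z) in *. set (M1 := m i) in *. set (M2 := m (i+1)%Z) in *.
  set (N0 := n (i-1)%Z) in *. set (N1 := n i) in *. set (N2 := n (i+1)%Z) in *.
  assert (HS: 0 < A + B) by lra.
  assert (X1: (B*(M1-M0) - A^2)*(A+B) = A*(B*(M2-M0) - (A+B)^2) - B*(A*M2+B*M0 - (A+B)*(M1+A))) by ring.
  replace (B*(M2-M0) - (A+B)^2) with 0 in X1 by lra.
  replace (A*M2+B*M0 - (A+B)*(M1+A)) with 0 in X1 by lra.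
  assert (Eu: B*(M1-M0) = A^2) by nra.
  assert (Ev: M2 - M1 = B + 2*A) by nra.
  assert (X2: (N0-N1 - (A+2*B))*(A+B) = (A*(N0-N2) - (A+B)^2) + (B*N0 + A*N2 - (A+B)*(N1+B))) by ring.
  replace (A*(N0-N2) - (A+B)^2) with 0 in X2 by lra.
  replace (B*N0 + A*N2 - (A+B)*(N1+B)) with 0 in X2 by lra.
  assert (Ep: N0 - N1 = A + 2*B) by nra.
  assert (Eq: A*(N1-N2) = B^2) by nra.
  assert (HM: M1 - M0 = A^2/B) by (field_simplify; lra || (apply (Rmult_eq_reg_l B); [field_simplify; lra|lra])).
  assert (HM2: M2 - M0 = (A+B)^2/B) by (replace (M2-M0) with ((M2-M1)+(M1-M0)) by ring; rewrite Ev, HM; field; lra).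
  assert (HN: N1 - N2 = B^2/A) by (apply (Rmult_eq_reg_l A); [rewrite Eq; field|]; lra).
  assert (HN2: N0 - N2 = (A+B)^2/A) by (replace (N0-N2) with ((N0-N1)+(N1-N2)) by ring; rewrite Ep, HN; field; lra).
  rewrite HM, HM2, HN, HN2, Ev, Ep.
  assert (Hw: sqrt (8 * ((A + 2*B) / (A^2/B)) + 1) = 4*(B/A)+1).
  { replace (8 * ((A + 2*B) / (A^2/B)) + 1) with ((4*(B/A)+1)^2) by (field; lra).
    apply sqrt_pow2. assert (0 < B/A) by (apply Rdiv_lt_0_compat; lra). lra. }
  rewrite Hw.
  assert (0 < B/A) by (apply Rdiv_lt_0_compat; lra).
  repeat split; field; repeat split; lra.
Qed.
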